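(* Let $\mathcal{G}_0$ be a real semisimple Lie algebra with Cartan decomposition $\mathcal{G}_0=\mathcal{T}_0+\mathcal{P}_0$, let $\mathcal{G}$ be its complexification and $\mathcal{G}_k=\mathcal{T}_0+i\mathcal{P}_0$ the associated compact real form of $\mathcal{G}$. Let $S$ be a finite abelian semigroup such that the expanded algebra $\mathcal{G}_{k,S}=S\otimes\mathcal{G}_k$ is compact (i.e. all eigenvalues $\xi_\alpha$ of the matrix $\mathbf{g}^S$ are positive). Then $\mathcal{G}_{0,S}=S\otimes\mathcal{G}_0=\mathcal{T}_{0,S}+\mathcal{P}_{0,S}$, with $\mathcal{T}_{0,S}=S\otimes\mathcal{T}_0=\mathrm{span}\{\lambda_\alpha\otimes X:X\in\mathcal{T}_0\}$ and $\mathcal{P}_{0,S}=S\otimes\mathcal{P}_0$, is a Cartan decomposition of the real Lie algebra $\mathcal{G}_{0,S}$.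
   Context: For a (real or complex) Lie algebra $\mathcal{L}$ with basis $\{X_i\}$, $[X_i,X_j]=C_{ij}^kX_k$, and a finite abelian semigroup $S=\{\lambda_\alpha\}$ with 2-selector $K_{\alpha\beta}^\gamma$ ($=1$ if $\lambda_\alpha\lambda_\beta=\lambda_\gamma$, else $0$), the $S$-expanded algebra $S\otimes\mathcal{L}$ has basis $\lambda_\alpha\otimes X_i$ (over the same field) and bracket $[\lambda_\alpha\otimes X_i,\lambda_\beta\otimes X_j]=K_{\alpha\beta}^\gamma C_{ij}^k\,\lambda_\gamma\otimes X_k$; $S\otimes\mathcal{G}$ is the complexification of $S\otimes\mathcal{G}_0$. The matrix $\mathbf{g}^S$ has entries $g^S_{\alpha\beta}=K_{\alpha\gamma}^\lambda K_{\beta\lambda}^\gamma$. A real semisimple Lie algebra is compact if its Killing form is negative definite. Cartan decomposition: if $\mathcal{L}_0$ is a real semisimple Lie algebra with complexification $\mathcal{L}$ and $\sigma$ the conjugation of $\mathcal{L}$ with respect to $\mathcal{L}_0$, a decomposition $\mathcal{L}_0=\mathcal{T}+\mathcal{P}$ with $\mathcal{T}$ a subalgebra is a Cartan decomposition if there exists a compact real form $\mathcal{L}_k$ of $\mathcal{L}$ with $\sigma(\mathcal{L}_k)\subset\mathcal{L}_k$, $\mathcal{T}=\mathcal{L}_0\cap\mathcal{L}_k$ and $\mathcal{P}=\mathcal{L}_0\cap(i\mathcal{L}_k)$. *)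

(* Defs.v *)
From HB Require Import structures.
From mathcomp Require Import all_boot all_order all_algebra.
From mathcomp Require Import complex.
From mathcomp Require Import reals.
Set Implicit Arguments. Unset Strict Implicit. Unset Printing Implicit Defensive.
Import Order.TTheory GRing.Theory Num.Theory.
Local Open Scope ring_scope.

(* Lie algebras given by structure constants w.r.t. a basis indexed by
   a finite type I: vectors are finite functions I -> K, and
   [X_i, X_j] = C_ij^k X_k.                                            *)

Definition sconst (K : Type) (I : finType) := I -> I -> I -> K.

Definition lie_br (K : comNzRingType) (I : finType) (c : sconst K I)
  (x y : {ffun I -> K}) : {ffun I -> K} :=
  [ffun k => \sum_(i : I) \sum_(j : I) x i * y j * c i j k].

Definition is_lie (K : comNzRingType) (I : finType) (c : sconst K I) : Prop :=
  (forall x, lie_br c x x = 0) /\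
  (forall x y z, lie_br c x (lie_br c y z) + lie_br c y (lie_br c z x)
                 + lie_br c z (lie_br c x y) = 0).

Definition scv (K : comNzRingType) (I : finType) (a : K) (x : {ffun I -> K})
  : {ffun I -> K} := [ffun i => a * x i].

Definition subspace (K : comNzRingType) (I : finType)
  (A : {ffun I -> K} -> Prop) : Prop :=
  A 0 /\ (forall x y, A x -> A y -> A (x + y)) /\
  (forall (a : K) x, A x -> A (scv a x)).

Definition subalgebra (K : comNzRingType) (I : finType) (c : sconst K I)
  (A : {ffun I -> K} -> Prop) : Prop :=
  subspace A /\ (forall x y, A x -> A y -> A (lie_br c x y)).

Definition is_ideal (K : comNzRingType) (I : finType) (c : sconst K I)
  (A : {ffun I -> K} -> Prop) : Prop :=
  subspace A /\ (forall x a, A a -> A (lie_br c x a)).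

Definition abelian_sub (K : comNzRingType) (I : finType) (c : sconst K I)
  (A : {ffun I -> K} -> Prop) : Prop :=
  forall a b, A a -> A b -> lie_br c a b = 0.

Definition semisimple (K : fieldType) (I : finType) (c : sconst K I) : Prop :=
  is_lie c /\
  (forall A, is_ideal c A -> abelian_sub c A -> forall a, A a -> a = 0).

(* Standard basis vectors and the Killing form B(x,y) = tr(ad x ad y). *)
Definition ebasis (K : comNzRingType) (I : finType) (k : I) : {ffun I -> K} :=
  [ffun j => (j == k)%:R].

Definition killing (K : comNzRingType) (I : finType) (c : sconst K I)
  (x y : {ffun I -> K}) : K :=
  \sum_(k : I) lie_br c x (lie_br c y (ebasis K k)) k.

Definition compact (R : realType) (I : finType) (c : sconst R I) : Prop :=
  semisimple c /\ (forall x, x != 0 -> killing c x x < 0).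

Definition selector (K : comNzRingType) (S : finType) (mul : S -> S -> S)
  (a b g : S) : K := (mul a b == g)%:R.

(* structure constants of S (x) L in the basis lambda_a (x) X_i *)
Definition expand (K : comNzRingType) (S : finType) (mul : S -> S -> S)
  (I : finType) (c : sconst K I) : sconst K (S * I)%type :=
  fun p q r => selector K mul p.1 q.1 r.1 * c p.2 q.2 r.2.

Definition tens (K : comNzRingType) (S I : finType) (a : S)
  (x : {ffun I -> K}) : {ffun (S * I)%type -> K} :=
  [ffun p => (p.1 == a)%:R * x p.2].

Definition span (K : comNzRingType) (J : finType) (A : {ffun J -> K} -> Prop)
  (v : {ffun J -> K}) : Prop :=
  exists (m : nat) (r : 'I_m -> K) (u : 'I_m -> {ffun J -> K}),
    (forall k, A (u k)) /\ v = \sum_(k < m) scv (r k) (u k).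

Definition expand_sub (K : comNzRingType) (S I : finType)
  (A : {ffun I -> K} -> Prop) : {ffun (S * I)%type -> K} -> Prop :=
  span (fun v => exists (a : S) (x : {ffun I -> K}), A x /\ v = tens a x).

(* The complexification of the real Lie algebra with
   constants c is the complex Lie algebra {ffun I -> R[i]} with the same
   (real) constants; the conjugation sigma w.r.t. the real form is the
   entrywise complex conjugation.                                       *)

Definition cst (R : rcfType) (I : finType) (c : sconst R I) : sconst R[i] I :=
  fun i j k => real_complex R (c i j k).

Definition cplx (R : rcfType) (I : finType) (x : {ffun I -> R})
  : {ffun I -> R[i]} := [ffun i => real_complex R (x i)].

Definition sigma (R : rcfType) (I : finType) (v : {ffun I -> R[i]})
  : {ffun I -> R[i]} := [ffun i => conjc (v i)].

Definition imag_unit (R : rcfType) : R[i] := Complex 0 1.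

(* Real subspaces of the complex algebra are given by a real basis
   b : J -> {ffun I -> R[i]}; rspan b is its real linear span.          *)
Definition rspan (R : rcfType) (J I : finType) (b : J -> {ffun I -> R[i]})
  (v : {ffun I -> R[i]}) : Prop :=
  exists r : J -> R, v = \sum_(p : J) scv (real_complex R (r p)) (b p).

Definition i_rspan (R : rcfType) (J I : finType) (b : J -> {ffun I -> R[i]})
  (v : {ffun I -> R[i]}) : Prop :=
  exists w, rspan b w /\ v = scv (imag_unit R) w.

(* L_k := rspan b is a real form of the complexification of c (i.e. a real
   subalgebra with L = L_k (+) i L_k, equivalently b is a complex basis),
   it is closed under the bracket with real structure constants d in the
   basis b, and the real Lie algebra L_k (~ constants d) is compact.     *)
Definition compact_real_form (R : realType) (I : finType) (c : sconst R I)
  (b : I -> {ffun I -> R[i]}) (d : sconst R I) : Prop :=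
  [/\ (forall z : I -> R[i], \sum_(p : I) scv (z p) (b p) = 0 -> forall p, z p = 0),
      (forall p q, lie_br (cst c) (b p) (b q)
                   = \sum_(r : I) scv (real_complex R (d p q r)) (b r))
    & compact d].

(* The compact real form L_k = rspan b witnesses that L0 = T + P is a
   Cartan decomposition: sigma(L_k) in L_k, T = L0 /\ L_k, P = L0 /\ iL_k. *)
Definition cartan_witness (R : realType) (I : finType) (c : sconst R I)
  (T P : {ffun I -> R} -> Prop) (b : I -> {ffun I -> R[i]}) (d : sconst R I)
  : Prop :=
  [/\ compact_real_form c b d,
      (forall v, rspan b v -> rspan b (sigma v)),
      (forall x, T x <-> rspan b (cplx x))
    & (forall x, P x <-> i_rspan b (cplx x))].

Definition is_cartan_decomposition (R : realType) (I : finType)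
  (c : sconst R I) (T P : {ffun I -> R} -> Prop) : Prop :=
  [/\ semisimple c, subalgebra c T, subspace P,
      (forall x, exists t p, [/\ T t, P p & x = t + p])
    & exists b d, cartan_witness c T P b d].

(* Main.v *)
Require Import Defs.
From HB Require Import structures.
From mathcomp Require Import all_boot all_order all_algebra.
From mathcomp Require Import complex.
From mathcomp Require Import reals.
From Stdlib Require Import IndefiniteDescription.
From mathcomp Require Import ring.
Set Implicit Arguments. Unset Strict Implicit. Unset Printing Implicit Defensive.
Import Order.TTheory GRing.Theory Num.Theory.
Local Open Scope ring_scope.

Lemma fchoice (A B : Type) (P : A -> B -> Prop) :
  (forall a, exists b, P a b) -> exists f : A -> B, forall a, P a (f a).
Proof.
move=> H; exists (fun a => proj1_sig (constructive_indefinite_description _ (H a))).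
by move=> a; case: (constructive_indefinite_description _ (H a)).
Qed.

Section Gen.
Variables (K : comNzRingType) (I : finType) (c : sconst K I).
Implicit Types x y z : {ffun I -> K}.

Lemma lie_brE x y k : lie_br c x y k = \sum_i \sum_j x i * y j * c i j k.
Proof. by rewrite ffunE. Qed.

Lemma scvE (a : K) x i : scv a x i = a * x i.
Proof. by rewrite ffunE. Qed.

Lemma addvE x y i : (x + y) i = x i + y i.
Proof. by rewrite !ffunE. Qed.

Lemma oppvE x i : (- x) i = - x i.
Proof. by rewrite !ffunE. Qed.

Lemma zerovE i : (0 : {ffun I -> K}) i = 0.
Proof. by rewrite !ffunE. Qed.

Lemma lie_brDl x y z : lie_br c (x + y) z = lie_br c x z + lie_br c y z.
Proof.
apply/ffunP=> k; rewrite !ffunE -big_split /=; apply: eq_bigr => i _.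
rewrite -big_split /=; apply: eq_bigr => j _; rewrite !ffunE; ring.
Qed.

Lemma lie_brDr x y z : lie_br c x (y + z) = lie_br c x y + lie_br c x z.
Proof.
apply/ffunP=> k; rewrite !ffunE -big_split /=; apply: eq_bigr => i _.
rewrite -big_split /=; apply: eq_bigr => j _; rewrite !ffunE; ring.
Qed.

Lemma lie_brZl a x y : lie_br c (scv a x) y = scv a (lie_br c x y).
Proof.
apply/ffunP=> k; rewrite !ffunE mulr_sumr; apply: eq_bigr => i _.
rewrite mulr_sumr; apply: eq_bigr => j _; rewrite !ffunE; ring.
Qed.

Lemma lie_brZr a x y : lie_br c x (scv a y) = scv a (lie_br c x y).
Proof.
apply/ffunP=> k; rewrite !ffunE mulr_sumr; apply: eq_bigr => i _.
rewrite mulr_sumr; apply: eq_bigr => j _; rewrite !ffunE; ring.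
Qed.

Lemma lie_br0l y : lie_br c 0 y = 0.
Proof.
apply/ffunP=> k; rewrite !ffunE big1 // => i _; rewrite big1 // => j _.
by rewrite !ffunE !mul0r.
Qed.

Lemma lie_br0r y : lie_br c y 0 = 0.
Proof.
apply/ffunP=> k; rewrite !ffunE big1 // => i _; rewrite big1 // => j _.
by rewrite !ffunE mulr0 mul0r.
Qed.

Lemma lie_br_suml (J : Type) (r : seq J) (F : J -> {ffun I -> K}) y :
  lie_br c (\sum_(p <- r) F p) y = \sum_(p <- r) lie_br c (F p) y.
Proof. exact: (big_morph (fun x => lie_br c x y) (fun x x' => lie_brDl x x' y) (lie_br0l y)). Qed.

Lemma lie_br_sumr (J : Type) (r : seq J) (F : J -> {ffun I -> K}) y :
  lie_br c y (\sum_(p <- r) F p) = \sum_(p <- r) lie_br c y (F p).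
Proof. exact: (big_morph (fun x => lie_br c y x) (fun x x' => lie_brDr y x x') (lie_br0r y)). Qed.

Lemma scvA a b x : scv a (scv b x) = scv (a * b) x.
Proof. by apply/ffunP=> i; rewrite !ffunE mulrA. Qed.
Lemma scv1 x : scv 1 x = x.
Proof. by apply/ffunP=> i; rewrite !ffunE mul1r. Qed.
Lemma scvDr a x y : scv a (x + y) = scv a x + scv a y.
Proof. by apply/ffunP=> i; rewrite !ffunE mulrDr. Qed.
Lemma scvDl a b x : scv (a + b) x = scv a x + scv b x.
Proof. by apply/ffunP=> i; rewrite !ffunE mulrDl. Qed.
Lemma scv0l x : scv 0 x = 0.
Proof. by apply/ffunP=> i; rewrite !ffunE mul0r. Qed.
Lemma scv0r a : scv a (0 : {ffun I -> K}) = 0.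
Proof. by apply/ffunP=> i; rewrite !ffunE mulr0. Qed.
Lemma scvN1 x : scv (-1) x = - x.
Proof. by apply/ffunP=> i; rewrite !ffunE mulN1r. Qed.

Lemma scv_sumr (J : Type) (r : seq J) (F : J -> {ffun I -> K}) a :
  scv a (\sum_(p <- r) F p) = \sum_(p <- r) scv a (F p).
Proof. exact: (big_morph (scv a) (scvDr a) (scv0r a)). Qed.

Lemma scv_suml (J : Type) (r : seq J) (F : J -> K) x :
  scv (\sum_(p <- r) F p) x = \sum_(p <- r) scv (F p) x.
Proof. exact: (big_morph (fun a => scv a x) (fun a b => scvDl a b x) (scv0l x)). Qed.

Lemma ffun_decomp x : x = \sum_i scv (x i) (ebasis K i).
Proof.
apply/ffunP=> k; rewrite sum_ffunE (bigD1 k) //= big1 ?addr0.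
  by rewrite !ffunE eqxx mulr1.
by move=> i ik; rewrite !ffunE eq_sym (negbTE ik) mulr0.
Qed.

Lemma sum_sel (J : finType) (k : J) (F : J -> K) :
  \sum_j ((j == k)%:R * F j) = F k.
Proof.
rewrite (bigD1 k) //= eqxx mul1r big1 ?addr0 // => j jk.
by rewrite (negbTE jk) mul0r.
Qed.

Lemma sum_sel' (J : finType) (k : J) (F : J -> K) :
  \sum_j ((k == j)%:R * F j) = F k.
Proof. by rewrite -(sum_sel k); apply: eq_bigr => j _; rewrite eq_sym. Qed.

Lemma lie_br_basis i j : lie_br c (ebasis K i) (ebasis K j) = [ffun k => c i j k].
Proof.
apply/ffunP=> k; rewrite !ffunE -(sum_sel i (fun i' => c i' j k)).
apply: eq_bigr => i' _.
rewrite -(sum_sel j (fun j' => c i' j' k)) mulr_sumr; apply: eq_bigr => j' _; rewrite !ffunE; ring.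
Qed.

Lemma subspace_sum (A : {ffun I -> K} -> Prop) (J : Type) (r : seq J) (P : pred J) F :
  subspace A -> (forall p, P p -> A (F p)) -> A (\sum_(p <- r | P p) F p).
Proof.
move=> [A0 [AD AZ]] HF; elim/big_rec: _ => // p s Pp As.
by apply: AD => //; apply: HF.
Qed.

Lemma subspace_opp (A : {ffun I -> K} -> Prop) x : subspace A -> A x -> A (- x).
Proof. by move=> [_ [_ AZ]] Ax; rewrite -scvN1; apply: AZ. Qed.

Definition antisym := forall i j k, c i j k = - c j i k.

Lemma antisym_of_lie : is_lie c -> antisym.
Proof.
move=> [Halt _] i j k.
have := Halt (ebasis K i + ebasis K j).
rewrite !lie_brDl !lie_brDr !Halt add0r addr0 => /ffunP /(_ k).
rewrite !lie_br_basis !ffunE => /eqP; rewrite addr_eq0 => /eqP.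
done.
Qed.

Lemma lie_br_anti x y : antisym -> lie_br c x y = - lie_br c y x.
Proof.
move=> Ha; apply/ffunP=> k; rewrite !ffunE exchange_big -sumrN.
apply: eq_bigr => i _; rewrite -sumrN; apply: eq_bigr => j _.
rewrite Ha; ring.
Qed.

Definition jac x y z := lie_br c x (lie_br c y z) + lie_br c y (lie_br c z x)
  + lie_br c z (lie_br c x y).

Lemma bil (J1 J2 : finType) (a : J1 -> K) (u : J1 -> {ffun I -> K})
  (b : J2 -> K) (v : J2 -> {ffun I -> K}) :
  lie_br c (\sum_p scv (a p) (u p)) (\sum_q scv (b q) (v q)) =
  \sum_p \sum_q scv (a p * b q) (lie_br c (u p) (v q)).
Proof.
rewrite lie_br_suml; apply: eq_bigr => p _; rewrite lie_br_sumr.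
apply: eq_bigr => q _; by rewrite lie_brZl lie_brZr scvA.
Qed.

Lemma tri x y z : lie_br c x (lie_br c y z) =
  \sum_i \sum_l \sum_m scv (x i * y l * z m) (lie_br c (ebasis K i) (lie_br c (ebasis K l) (ebasis K m))).
Proof.
rewrite {1}(ffun_decomp y) {1}(ffun_decomp z) bil.
rewrite {1}(ffun_decomp x) lie_br_suml; apply: eq_bigr => i _.
rewrite lie_brZl lie_br_sumr scv_sumr; apply: eq_bigr => l _.
rewrite lie_br_sumr scv_sumr; apply: eq_bigr => m _.
by rewrite lie_brZr scvA; congr scv; ring.
Qed.

Lemma cyc3 (V : nmodType) (A B C : finType) (F : A -> B -> C -> V) :
  \sum_a \sum_b \sum_c F a b c = \sum_c \sum_a \sum_b F a b c.
Proof. by under eq_bigr do rewrite exchange_big; rewrite exchange_big. Qed.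

Lemma jac_expand x y z : jac x y z =
  \sum_i \sum_l \sum_m scv (x i * y l * z m) (jac (ebasis K i) (ebasis K l) (ebasis K m)).
Proof.
rewrite /jac !tri [X in _ + X + _]cyc3 [X in _ + _ + X]cyc3 [X in _ + _ + X]cyc3.
rewrite -!big_split; apply: eq_bigr => i _; rewrite -!big_split; apply: eq_bigr => l _.
rewrite -!big_split; apply: eq_bigr => m _ /=.
have -> : y l * z m * x i = x i * y l * z m by ring.
have -> : z m * x i * y l = x i * y l * z m by ring.
by rewrite !scvDr.
Qed.

End Gen.

Lemma is_lie_of_basis (F : numFieldType) (I : finType) (d : sconst F I) :
  antisym d -> (forall i l m, jac d (ebasis F i) (ebasis F l) (ebasis F m) = 0) -> is_lie d.
Proof.
move=> Ha Hj; split.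
  move=> x; apply/ffunP=> k; rewrite !ffunE.
  set s := \sum_i _.
  have ss : s = - s.
    rewrite {1}/s exchange_big /s -sumrN; apply: eq_bigr => i _; rewrite -sumrN.
    by apply: eq_bigr => j _; rewrite (Ha j i k); ring.
  have : s *+ 2 == 0 by rewrite mulr2n {1}ss addNr.
  by rewrite mulrn_eq0 /= => /eqP.
move=> x y z; have := jac_expand d x y z; rewrite {1}/jac => ->.
rewrite big1 // => i _; rewrite big1 // => l _; rewrite big1 // => m _.
by rewrite Hj scv0r.
Qed.

Lemma sum_enum (V : nmodType) (S : finType) (F : S -> V) :
  \sum_a F a = \sum_(k < #|S|) F (enum_val k).
Proof. by rewrite (big_enum_val F). Qed.

Definition slice (K : comNzRingType) (S I : finType) (a : S)
  (x : {ffun (S * I)%type -> K}) : {ffun I -> K} := [ffun i => x (a, i)].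

Section Expand.
Variables (K : comNzRingType) (S : finType) (mul : S -> S -> S) (I : finType).
Implicit Types (a e g : S) (x y : {ffun I -> K}) (v w : {ffun (S * I)%type -> K}).

Lemma tensE a x p : tens a x p = (p.1 == a)%:R * x p.2.
Proof. by rewrite ffunE. Qed.

Lemma tens_basis a x : tens a x = \sum_i scv (x i) (ebasis K (a, i)).
Proof.
apply/ffunP=> [[g k]]; rewrite sum_ffunE !ffunE /=.
rewrite -(sum_sel' k (fun i => (g == a)%:R * x i)); apply: eq_bigr => i _.
rewrite !ffunE xpair_eqE -mulnb natrM; ring.
Qed.

Lemma tens_decomp v : v = \sum_a tens a (slice a v).
Proof.
apply/ffunP=> [[g k]]; rewrite sum_ffunE.
rewrite -(sum_sel' g (fun a => v (a, k))); apply: eq_bigr => a _.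
by rewrite !ffunE /=.
Qed.

Lemma slice_tens a e x : slice a (tens e x) = scv ((a == e)%:R) x.
Proof. by apply/ffunP=> i; rewrite !ffunE. Qed.

Lemma sliceD a v w : slice a (v + w) = slice a v + slice a w.
Proof. by apply/ffunP=> i; rewrite !ffunE. Qed.
Lemma slice0 a : slice a (0 : {ffun (S * I)%type -> K}) = 0.
Proof. by apply/ffunP=> i; rewrite !ffunE. Qed.
Lemma sliceZ a r v : slice a (scv r v) = scv r (slice a v).
Proof. by apply/ffunP=> i; rewrite !ffunE. Qed.
Lemma slice_sum a (J : Type) (r : seq J) (F : J -> {ffun (S * I)%type -> K}) :
  slice a (\sum_(p <- r) F p) = \sum_(p <- r) slice a (F p).
Proof. exact: (big_morph (slice a) (sliceD a) (slice0 a)). Qed.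

Lemma slice_ext v w : (forall a, slice a v = slice a w) -> v = w.
Proof. by move=> H; apply/ffunP=> [[a i]]; have /ffunP/(_ i) := H a; rewrite !ffunE. Qed.

Lemma tensD a x y : tens a (x + y) = tens a x + tens a y.
Proof. by apply/ffunP=> p; rewrite !ffunE mulrDr. Qed.
Lemma tensZ a r x : tens a (scv r x) = scv r (tens a x).
Proof. by apply/ffunP=> p; rewrite !ffunE; ring. Qed.
Lemma tens0 a : tens a (0 : {ffun I -> K}) = 0.
Proof. by apply/ffunP=> p; rewrite !ffunE mulr0. Qed.

Lemma ebasis_pair a (i : I) : ebasis K (a, i) = tens a (ebasis K i).
Proof. by apply/ffunP=> [[g k]]; rewrite !ffunE xpair_eqE -mulnb natrM. Qed.

Variable c : sconst K I.

Lemma lie_tens a e x y :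
  lie_br (expand mul c) (tens a x) (tens e y) = tens (mul a e) (lie_br c x y).
Proof.
rewrite [tens a x]tens_basis [tens e y]tens_basis bil; apply/ffunP=> [[g k]]; rewrite sum_ffunE !ffunE /=.
rewrite mulr_sumr; apply: eq_bigr => i _; rewrite sum_ffunE mulr_sumr.
apply: eq_bigr => j _; rewrite lie_br_basis !ffunE /expand /selector /= eq_sym; ring.
Qed.

Lemma slice_lie g v w : slice g (lie_br (expand mul c) v w) =
  \sum_a \sum_e scv (selector K mul a e g) (lie_br c (slice a v) (slice e w)).
Proof.
rewrite {1}(tens_decomp v) {1}(tens_decomp w) lie_br_suml slice_sum.
apply: eq_bigr => a _; rewrite lie_br_sumr slice_sum; apply: eq_bigr => e _.
by rewrite lie_tens slice_tens /selector eq_sym.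
Qed.

Lemma expand_sub_iff (A : {ffun I -> K} -> Prop) v : subspace A ->
  (expand_sub A v <-> forall a, A (slice a v)).
Proof.
move=> sA; split.
  move=> [m [r [u [Hu ->]]]] a; rewrite slice_sum; apply: subspace_sum => // k _.
  rewrite sliceZ; have [e [x [Ax ->]]] := Hu k; rewrite slice_tens.
  move: sA => [_ [_ AZ]]; by apply: (AZ); apply: (AZ).
move=> H; exists #|S|, (fun _ => 1), (fun k => tens (enum_val k) (slice (enum_val k) v)).
split; first by move=> k; exists (enum_val k), (slice (enum_val k) v).
rewrite {1}(tens_decomp v) sum_enum; apply: eq_bigr => k _; by rewrite scv1.
Qed.
End Expand.

Lemma is_lie_expand (F : numFieldType) (S : finType) (mul : S -> S -> S) (I : finType)
  (c : sconst F I) : associative mul -> commutative mul ->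
  is_lie c -> is_lie (expand mul c).
Proof.
move=> mA mC Hl; have Ha := antisym_of_lie Hl.
apply: is_lie_of_basis.
  by move=> p q r; rewrite /expand /selector mC Ha mulrN.
move=> [a i] [e l] [g m]; rewrite /jac !ebasis_pair !lie_tens.
have -> : mul e (mul g a) = mul a (mul e g) by rewrite [LHS]mA [LHS]mC.
have -> : mul g (mul a e) = mul a (mul e g) by rewrite [LHS]mC -mA.
rewrite -!tensD.
by have := Hl.2 (ebasis F i) (ebasis F l) (ebasis F m); rewrite -/(jac _ _ _ _) => ->; rewrite tens0.
Qed.

Section Cplx.
Variable R : realType.
Local Notation C := (R[i]).
Local Notation iu := (imag_unit R).
Local Notation rc := (real_complex R).

Lemma iuiu : iu * iu = -1 :> C.
Proof. by rewrite /imag_unit -expr2 sqr_i. Qed.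

Lemma scalarC (a : C) (u w : R) :
  a * (rc u + iu * rc w) = rc (complex.Re a * u - complex.Im a * w) + iu * rc (complex.Im a * u + complex.Re a * w).
Proof. case: a => r s /=; rewrite /imag_unit; simpc; by congr Complex; ring. Qed.

Variable I : finType.
Implicit Types (x y : {ffun I -> R}) (v w : {ffun I -> C}).

Lemma cplxE x i : cplx x i = rc (x i). Proof. by rewrite ffunE. Qed.
Lemma cplxD x y : cplx (x + y) = cplx x + cplx y.
Proof. by apply/ffunP=> i; rewrite !ffunE rmorphD. Qed.
Lemma cplx0 : cplx (0 : {ffun I -> R}) = 0.
Proof. by apply/ffunP=> i; rewrite !ffunE rmorph0. Qed.
Lemma cplxZ r x : cplx (scv r x) = scv (rc r) (cplx x).
Proof. by apply/ffunP=> i; rewrite !ffunE rmorphM. Qed.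
Lemma cplxN x : cplx (- x) = - cplx x.
Proof. by apply/ffunP=> i; rewrite !ffunE rmorphN. Qed.
Lemma cplx_inj x y : cplx x = cplx y -> x = y.
Proof.
by move=> /ffunP H; apply/ffunP=> i; have := H i; rewrite !ffunE => /complexI.
Qed.
Lemma cplx_eq0 x : cplx x = 0 -> x = 0.
Proof. by rewrite -cplx0 => /cplx_inj. Qed.

Lemma cplx_lie (c : sconst R I) x y : lie_br (cst c) (cplx x) (cplx y) = cplx (lie_br c x y).
Proof.
apply/ffunP=> k; rewrite !ffunE rmorph_sum; apply: eq_bigr => i _.
rewrite rmorph_sum; apply: eq_bigr => j _; by rewrite !ffunE !rmorphM.
Qed.

Lemma sigmaE v i : sigma v i = conjc (v i). Proof. by rewrite ffunE. Qed.
Lemma sigmaD v w : sigma (v + w) = sigma v + sigma w.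
Proof. by apply/ffunP=> i; rewrite !ffunE rmorphD. Qed.
Lemma sigma0 : sigma (0 : {ffun I -> C}) = 0.
Proof. by apply/ffunP=> i; rewrite !ffunE rmorph0. Qed.
Lemma sigmaZ a v : sigma (scv a v) = scv (conjc a) (sigma v).
Proof. by apply/ffunP=> i; rewrite !ffunE rmorphM. Qed.
Lemma sigmaK v : sigma (sigma v) = v.
Proof. by apply/ffunP=> i; rewrite !ffunE conjcK. Qed.
Lemma sigma_cplx x : sigma (cplx x) = cplx x.
Proof. by apply/ffunP=> i; rewrite !ffunE conjc_real. Qed.
Lemma sigma_lie (c : sconst R I) v w :
  sigma (lie_br (cst c) v w) = lie_br (cst c) (sigma v) (sigma w).
Proof.
apply/ffunP=> k; rewrite !ffunE rmorph_sum; apply: eq_bigr => i _.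
rewrite rmorph_sum; apply: eq_bigr => j _; rewrite !ffunE !rmorphM /cst; congr (_ * _ * _); exact: conjc_real.
Qed.

Definition rev v : {ffun I -> R} := [ffun i => complex.Re (v i)].
Definition imv v : {ffun I -> R} := [ffun i => complex.Im (v i)].

Lemma vdecomp v : v = cplx (rev v) + scv iu (cplx (imv v)).
Proof. by apply/ffunP=> i; rewrite !ffunE; case: (v i) => r s; simpc. Qed.

Lemma rev_sigma v : cplx (rev v) = scv (2%:R^-1) (v + sigma v).
Proof. by apply/ffunP=> i; rewrite !ffunE ReJ_add mulrC. Qed.
Lemma imv_sigma v : cplx (imv v) = scv (2%:R^-1 * iu) (sigma v + scv (-1) v).
Proof. by apply/ffunP=> i; rewrite !ffunE ImJ_sub /imag_unit mulN1r; ring. Qed.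

End Cplx.

Lemma surj_basis (F : fieldType) (J : finType) (B : J -> {ffun J -> F}) :
  (forall z : J -> F, \sum_p scv (z p) (B p) = 0 -> forall p, z p = 0) ->
  forall v, exists z : J -> F, v = \sum_p scv (z p) (B p).
Proof.
move=> Hind.
pose M : 'M[F]_#|J| := \matrix_(i, j) B (enum_val i) (enum_val j).
have key : forall w : 'rV[F]_#|J|, forall k,
    (\sum_p scv (w 0 (enum_rank p)) (B p)) k = (w *m M) 0 (enum_rank k).
  move=> w k; rewrite sum_ffunE sum_enum !mxE; apply: eq_bigr => i _.
  by rewrite !ffunE !mxE enum_valK enum_rankK.
have kerM : forall w : 'rV[F]_#|J|, w *m M = 0 -> w = 0.
  move=> w wM; have H0 : \sum_p scv (w 0 (enum_rank p)) (B p) = 0.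
    by apply/ffunP=> k; rewrite key wM !mxE ffunE.
  apply/rowP => i; rewrite mxE; have := Hind _ H0 (enum_val i).
  by rewrite enum_valK.
have unitM : M \in unitmx.
  rewrite -row_free_unit -kermx_eq0; apply/eqP/row_matrixP => i.
  by rewrite row0; apply: kerM; rewrite -row_mul mulmx_ker row0.
move=> v; pose u : 'rV[F]_#|J| := \row_j v (enum_val j).
pose w := u *m invmx M; exists (fun p => w 0 (enum_rank p)).
by apply/ffunP=> k; rewrite key /w mulmxKV // mxE enum_rankK.
Qed.

Section Ideals.
Variables (K : comNzRingType) (I : finType) (c : sconst K I).

Lemma ideal_inter (A B : {ffun I -> K} -> Prop) : is_ideal c A -> is_ideal c B ->
  is_ideal c (fun v => A v /\ B v).
Proof.
move=> [[A0 [AD AZ]] Ai] [[B0 [BD BZ]] Bi]; split; [split; [|split]|].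
- by [].
- by move=> x y [? ?] [? ?]; split; [apply: AD|apply: BD].
- by move=> a x [? ?]; split; [apply: AZ|apply: BZ].
- by move=> x a [? ?]; split; [apply: Ai|apply: Bi].
Qed.

Lemma ideal_sum (A B : {ffun I -> K} -> Prop) : is_ideal c A -> is_ideal c B ->
  is_ideal c (fun v => exists x y, [/\ A x, B y & v = x + y]).
Proof.
move=> [[A0 [AD AZ]] Ai] [[B0 [BD BZ]] Bi]; split; [split; [|split]|].
- by exists 0, 0; rewrite addr0.
- move=> v w [x [y [Ax By ->]]] [x' [y' [Ax' By' ->]]].
  exists (x + x'), (y + y'); split; [exact: AD|exact: BD|].
  by rewrite addrACA.
- move=> a v [x [y [Ax By ->]]]; exists (scv a x), (scv a y).
  by split; [exact: AZ|exact: BZ|rewrite scvDr].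
- move=> z v [x [y [Ax By ->]]]; exists (lie_br c z x), (lie_br c z y).
  by split; [exact: Ai|exact: Bi|rewrite lie_brDr].
Qed.
End Ideals.

Section Semisimple.
Variable R : realType.
Local Notation C := (R[i]).
Local Notation iu := (imag_unit R).
Local Notation rc := (real_complex R).
Variable J : finType.

Lemma real_part (d : sconst R J) : semisimple d ->
  forall KK : {ffun J -> C} -> Prop, is_ideal (cst d) KK -> abelian_sub (cst d) KK ->
  (forall v, KK v -> KK (sigma v)) -> forall v, KK v -> v = 0.
Proof.
move=> [_ Hss] KK [[K0 [KD KZ]] Kid] Kab Ks v Kv.
pose KR x := KK (cplx x).
have idR : is_ideal d KR.
  split; [split; [|split]|].
  - by rewrite /KR cplx0.
  - by move=> x y; rewrite /KR cplxD; exact: KD.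
  - by move=> a x; rewrite /KR cplxZ; exact: KZ.
  - by move=> x a; rewrite /KR -cplx_lie; exact: Kid.
have abR : abelian_sub d KR.
  by move=> x y Kx Ky; apply: cplx_eq0; rewrite -cplx_lie; exact: Kab.
have hre : rev v = 0.
  apply: (Hss KR idR abR); rewrite /KR rev_sigma; apply: (KZ); apply: (KD) => //.
  exact: Ks.
have him : imv v = 0.
  apply: (Hss KR idR abR); rewrite /KR imv_sigma; apply: (KZ); apply: (KD).
    exact: Ks.
  exact: KZ.
by rewrite (vdecomp v) hre him cplx0 scv0r addr0.
Qed.

Lemma cst_antisym (d : sconst R J) : antisym d -> antisym (cst d).
Proof. by move=> Ha i j k; rewrite /cst Ha rmorphN. Qed.

Lemma cplx_semisimple (d : sconst R J) : semisimple d ->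
  forall JJ : {ffun J -> C} -> Prop, is_ideal (cst d) JJ -> abelian_sub (cst d) JJ ->
  forall z, JJ z -> z = 0.
Proof.
move=> Hs JJ Jid Jab z Jz.
have Ha := cst_antisym (antisym_of_lie Hs.1).
pose sJ w := JJ (sigma w).
have [[J0 [JD JZ]] Ji] := Jid.
have sid : is_ideal (cst d) sJ.
  split; [split; [|split]|].
  - by rewrite /sJ sigma0.
  - by move=> x y; rewrite /sJ sigmaD; exact: JD.
  - by move=> a x; rewrite /sJ sigmaZ; exact: JZ.
  - by move=> x a; rewrite /sJ sigma_lie; exact: Ji.
have sab : abelian_sub (cst d) sJ.
  move=> x y sx sy; rewrite -[LHS]sigmaK sigma_lie.
  by rewrite (Jab _ _ sx sy) sigma0.
have zero1 : forall v, JJ v -> sJ v -> v = 0.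
  move=> v0 Jv0 sv0; apply: (real_part Hs (ideal_inter Jid sid) _ _ (conj Jv0 sv0)).
  - by move=> x y [Jx _] [Jy _]; exact: Jab.
  - by move=> v [Jv sv]; split => //; rewrite /sJ sigmaK.
apply: (real_part Hs (ideal_sum Jid sid)).
- move=> v w [x [y [Jx sy ->]]] [x' [y' [Jx' sy' ->]]].
  rewrite !lie_brDl !lie_brDr (Jab _ _ Jx Jx') (sab _ _ sy sy') add0r addr0.
  have h1 : JJ (lie_br (cst d) x y').
    by rewrite (lie_br_anti _ _ Ha); apply: (subspace_opp Jid.1); exact: Ji.
  have h2 : sJ (lie_br (cst d) x y') by exact: sid.2.
  have h3 : JJ (lie_br (cst d) y x') by exact: Ji.
  have h4 : sJ (lie_br (cst d) y x').
    by rewrite (lie_br_anti _ _ Ha); apply: (subspace_opp sid.1); exact: sid.2.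
  by rewrite (zero1 _ h1 h2) (zero1 _ h3 h4) addr0.
- move=> v [x [y [Jx sy ->]]]; exists (sigma y), (sigma x).
  by split => //; [rewrite /sJ sigmaK | rewrite sigmaD addrC].
- by exists z, 0; split => //; [rewrite /sJ sigma0 | rewrite addr0].
Qed.

Lemma brC (c : sconst R J) u v x y :
  lie_br (cst c) (cplx u + scv iu (cplx v)) (cplx x + scv iu (cplx y)) =
  cplx (lie_br c u x - lie_br c v y) + scv iu (cplx (lie_br c u y + lie_br c v x)).
Proof.
rewrite !lie_brDl !lie_brDr !lie_brZl !lie_brZr !cplx_lie !scvA iuiu scvN1.
by apply/ffunP=> k; rewrite !ffunE; ring.
Qed.

Lemma scalarV (al : C) (x y : {ffun J -> R}) :
  scv al (cplx x + scv iu (cplx y)) =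
  cplx (scv (complex.Re al) x - scv (complex.Im al) y) +
  scv iu (cplx (scv (complex.Im al) x + scv (complex.Re al) y)).
Proof. by apply/ffunP=> k; rewrite !ffunE scalarC. Qed.

Lemma semisimple_transfer (c d : sconst R J) (B : J -> {ffun J -> C}) :
  (forall z : J -> C, \sum_p scv (z p) (B p) = 0 -> forall p, z p = 0) ->
  (forall p q, lie_br (cst c) (B p) (B q) = \sum_r scv (rc (d p q r)) (B r)) ->
  is_lie c -> semisimple d -> semisimple c.
Proof.
move=> Hind Hbr Hl Hs; split => // A [[A0 [AD AZ]] Aid] Aab a Aa.
pose phi (z : {ffun J -> C}) := \sum_p scv (z p) (B p).
have phiD : forall z w, phi (z + w) = phi z + phi w.
  by move=> z w; rewrite /phi -big_split; apply: eq_bigr => p _; rewrite ffunE scvDl.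
have phi0 : phi 0 = 0 by rewrite /phi big1 // => p _; rewrite ffunE scv0l.
have phiZ : forall al z, phi (scv al z) = scv al (phi z).
  by move=> al z; rewrite /phi scv_sumr; apply: eq_bigr => p _; rewrite ffunE scvA.
have phi_inj : forall z w, phi z = phi w -> z = w.
  move=> z w e; apply/ffunP => p; apply/eqP; rewrite -subr_eq0; apply/eqP.
  apply: (Hind (fun p => z p - w p)).
  have : phi z - phi w = 0 by rewrite e subrr.
  rewrite /phi -sumrB => H; rewrite -[X in _ = X]H; apply: eq_bigr => q _; apply/ffunP => k.
  by rewrite !ffunE; ring.
have phi_lie : forall z w, phi (lie_br (cst d) z w) = lie_br (cst c) (phi z) (phi w).
  move=> z w; rewrite /phi.
  transitivity (\sum_r \sum_p \sum_q scv (z p * w q * cst d p q r) (B r)).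
    apply: eq_bigr => r _; rewrite ffunE scv_suml; apply: eq_bigr => p _.
    by rewrite scv_suml.
  rewrite cyc3 cyc3 bil; apply: eq_bigr => p _; apply: eq_bigr => q _.
  by rewrite Hbr scv_sumr; apply: eq_bigr => r _; rewrite scvA.
pose AC v := exists x y, [/\ A x, A y & v = cplx x + scv iu (cplx y)].
have Aop : forall x, A x -> A (- x) by move=> x; apply: subspace_opp.
have ACid : is_ideal (cst c) AC.
  split; [split; [|split]|].
  - by exists 0, 0; split => //; rewrite cplx0 scv0r addr0.
  - move=> v w [x [y [Ax Ay ->]]] [x' [y' [Ax' Ay' ->]]].
    exists (x + x'), (y + y'); split; [exact: AD|exact: AD|].
    by rewrite !cplxD scvDr addrACA.
  - move=> al v [x [y [Ax Ay ->]]].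
    exists (scv (complex.Re al) x - scv (complex.Im al) y),
           (scv (complex.Im al) x + scv (complex.Re al) y).
    split; last exact: scalarV.
      by apply: AD; [exact: AZ|apply: Aop; exact: AZ].
    by apply: AD; exact: AZ.
  - move=> w v [x [y [Ax Ay ->]]]; rewrite (vdecomp w) brC.
    exists (lie_br c (rev w) x - lie_br c (imv w) y),
           (lie_br c (rev w) y + lie_br c (imv w) x).
    split => //; apply: AD; try apply: Aop; exact: Aid.
have ACab : abelian_sub (cst c) AC.
  move=> v w [x [y [Ax Ay ->]]] [x' [y' [Ax' Ay' ->]]].
  rewrite brC (Aab x x') // (Aab y y') // (Aab x y') // (Aab y x') //.
  by rewrite subrr addr0 cplx0 scv0r addr0.
pose JJ z := AC (phi z).
have JJid : is_ideal (cst d) JJ.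
  have [[C0 [CD CZ]] Ci] := ACid.
  split; [split; [|split]|].
  - by rewrite /JJ phi0.
  - by move=> z w; rewrite /JJ phiD; exact: CD.
  - by move=> al z; rewrite /JJ phiZ; exact: CZ.
  - by move=> w z; rewrite /JJ phi_lie; exact: Ci.
have JJab : abelian_sub (cst d) JJ.
  move=> z w Jz Jw; apply: phi_inj; rewrite phi_lie phi0; exact: ACab.
have [z0 ez0] := surj_basis Hind (cplx a).
pose zz := [ffun p => z0 p].
have phzz : phi zz = cplx a by rewrite ez0 /phi; apply: eq_bigr => p _; rewrite ffunE.
have : JJ zz by rewrite /JJ phzz; exists a, 0; split => //; rewrite cplx0 scv0r addr0.
move/(cplx_semisimple Hs JJid JJab) => zz0.
by apply: cplx_eq0; rewrite -phzz zz0 phi0.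
Qed.
End Semisimple.

Lemma lie_br_ext (K : comNzRingType) (I : finType) (c1 c2 : sconst K I) x y :
  (forall i j k, c1 i j k = c2 i j k) -> lie_br c1 x y = lie_br c2 x y.
Proof.
move=> H; apply/ffunP=> k; rewrite !ffunE; apply: eq_bigr => i _.
by apply: eq_bigr => j _; rewrite H.
Qed.

Lemma sum_pair (V : nmodType) (S I : finType) (F : (S * I)%type -> V) :
  \sum_p F p = \sum_a \sum_i F (a, i).
Proof. by rewrite pair_bigA; apply: eq_bigr => [[a i]]. Qed.

Lemma slice_sumB (K : comNzRingType) (S I : finType) (a : S)
  (z : (S * I)%type -> K) (w : I -> {ffun I -> K}) :
  slice a (\sum_p scv (z p) (tens p.1 (w p.2))) = \sum_i scv (z (a, i)) (w i).
Proof.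
apply/ffunP=> k; rewrite !ffunE !sum_ffunE sum_pair.
transitivity (\sum_e ((a == e)%:R * \sum_i z (e, i) * w i k)).
  apply: eq_bigr => e _; rewrite mulr_sumr; apply: eq_bigr => i _.
  by rewrite !ffunE /=; ring.
by rewrite sum_sel'; apply: eq_bigr => i _; rewrite ffunE.
Qed.

Section Witness.
Variable R : realType.
Local Notation C := (R[i]).
Local Notation iu := (imag_unit R).
Local Notation rc := (real_complex R).
Variables (S : finType) (mul : S -> S -> S) (I : finType).

Definition Bx (b : I -> {ffun I -> C}) (p : (S * I)%type) : {ffun (S * I)%type -> C} :=
  tens p.1 (b p.2).

Lemma rspan_iff (b : I -> {ffun I -> C}) v :
  rspan (Bx b) v <-> forall a, rspan b (slice a v).
Proof.
split.
  move=> [r ->] a; exists (fun i => r (a, i)); exact: slice_sumB.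
move=> H; have [f Hf] := fchoice H.
exists (fun p => f p.1 p.2); apply: slice_ext => a.
by rewrite [RHS]slice_sumB; exact: Hf.
Qed.

Lemma i_rspan_iff (J : finType) (b : J -> {ffun I -> C}) v :
  i_rspan b v <-> rspan b (scv (- iu) v).
Proof.
split.
  move=> [w [Hw ->]]; rewrite scvA.
  have -> : - iu * iu = 1 by rewrite mulNr iuiu opprK.
  by rewrite scv1.
move=> Hw; exists (scv (- iu) v); split => //.
by rewrite scvA mulrN iuiu opprK scv1.
Qed.

Lemma slice_cplx a (x : {ffun (S * I)%type -> R}) : slice a (cplx x) = cplx (slice a x).
Proof. by apply/ffunP=> i; rewrite !ffunE. Qed.

Lemma slice_sigma a (v : {ffun (S * I)%type -> C}) : slice a (sigma v) = sigma (slice a v).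
Proof. by apply/ffunP=> i; rewrite !ffunE. Qed.

End Witness.

Lemma expand_subspace (K : comNzRingType) (S I : finType) (A : {ffun I -> K} -> Prop) :
  subspace A -> subspace (@expand_sub K S I A).
Proof.
move=> sA; have [A0 [AD AZ]] := sA; split; [|split].
- by apply/(expand_sub_iff _ sA) => a; rewrite slice0.
- move=> x y /(expand_sub_iff _ sA) Hx /(expand_sub_iff _ sA) Hy.
  by apply/(expand_sub_iff _ sA) => a; rewrite sliceD; apply: AD.
- move=> r x /(expand_sub_iff _ sA) Hx.
  by apply/(expand_sub_iff _ sA) => a; rewrite sliceZ; apply: AZ.
Qed.

Lemma expand_subalgebra (K : comNzRingType) (S : finType) (mul : S -> S -> S) (I : finType)
  (c : sconst K I) (A : {ffun I -> K} -> Prop) :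
  subalgebra c A -> subalgebra (expand mul c) (@expand_sub K S I A).
Proof.
move=> [sA Abr]; split; first exact: expand_subspace.
move=> x y /(expand_sub_iff _ sA) Hx /(expand_sub_iff _ sA) Hy.
apply/(expand_sub_iff _ sA) => g; rewrite slice_lie.
apply: subspace_sum => // a _; apply: subspace_sum => // e _.
by have [_ [_ AZ]] := sA; apply: AZ; apply: Abr.
Qed.

Unset Implicit Arguments.
Set Strict Implicit.

Theorem theorem5 (R : realType) (I : finType) (c : sconst R I)
  (T0 P0 : {ffun I -> R} -> Prop)
  (b : I -> {ffun I -> R[i]}) (d : sconst R I)
  (S : finType) (mul : S -> S -> S)
  (mul_assoc : associative mul) (mul_comm : commutative mul) :
  is_cartan_decomposition c T0 P0 ->
  cartan_witness c T0 P0 b d ->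
  compact (expand mul d) ->
  is_cartan_decomposition (expand mul c)
    (@expand_sub R S I T0) (@expand_sub R S I P0).
Proof.
move=> [ssc Tsub Psub Hdec _] [[bind bbr compd] bsig HT HP] compE.
have sT := Tsub.1.
pose B := @Bx R S I b.
have Bind : forall z : (S * I)%type -> R[i], \sum_p scv (z p) (B p) = 0 -> forall p, z p = 0.
  move=> z Hz [a i]; have := congr1 (slice a) Hz; rewrite slice_sumB slice0 => H.
  exact: (bind (fun i => z (a, i)) H).
have Bbr : forall p q, lie_br (cst (expand mul c)) (B p) (B q) =
    \sum_r scv (real_complex R (expand mul d p q r)) (B r).
  move=> [a i] [e l].
  rewrite (@lie_br_ext _ _ _ (expand mul (cst c))); last first.
    by move=> p q r; rewrite /cst /expand /selector rmorphM rmorph_nat.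
  rewrite /B /Bx /= lie_tens bbr; apply: slice_ext => g.
  rewrite slice_tens slice_sumB scv_sumr; apply: eq_bigr => r _.
  by rewrite scvA /expand /selector /= rmorphM rmorph_nat eq_sym.
split.
- apply: (semisimple_transfer Bind Bbr); last exact: compE.1.
  exact: is_lie_expand mul_assoc mul_comm ssc.1.
- exact: expand_subalgebra.
- exact: expand_subspace.
- move=> x.
  have H2 : forall a, exists tp : {ffun I -> R} * {ffun I -> R},
      [/\ T0 tp.1, P0 tp.2 & slice a x = tp.1 + tp.2].
    by move=> a; have [t [p Hp]] := Hdec (slice a x); exists (t, p).
  have [f Hf] := fchoice H2.
  exists [ffun q => (f q.1).1 q.2], [ffun q => (f q.1).2 q.2]; split.
  + apply/(expand_sub_iff _ sT) => a; have [Ht _ _] := Hf a.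
    by rewrite (_ : slice a _ = (f a).1) //; apply/ffunP => i; rewrite !ffunE.
  + apply/(expand_sub_iff _ Psub) => a; have [_ Hp _] := Hf a.
    by rewrite (_ : slice a _ = (f a).2) //; apply/ffunP => i; rewrite !ffunE.
  + apply: slice_ext => a; rewrite sliceD; have [_ _ ->] := Hf a.
    by congr (_ + _); apply/ffunP => i; rewrite !ffunE.
- exists B, (expand mul d); split.
  + by split.
  + move=> v /rspan_iff Hv; apply/rspan_iff => a; rewrite slice_sigma; exact: bsig.
  + move=> x; rewrite (expand_sub_iff _ sT) rspan_iff.
    by split => H a; rewrite ?slice_cplx; apply/HT; rewrite -?slice_cplx; exact: H.
  + move=> x; rewrite (expand_sub_iff _ Psub) i_rspan_iff rspan_iff.
    split => H a.
      by rewrite sliceZ slice_cplx -i_rspan_iff; apply/HP; exact: H.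
    by apply/HP; rewrite i_rspan_iff -slice_cplx -sliceZ; exact: H.
Qed.
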